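(* Let $n\ge1$, $N=2^n$, and let $S_m^*$ ($0\le m\le n-1$) be the maps defined below. For a finitely supported $H:\{0,1\}^n\times\{0,1\}^n\times\mathbb{Z}\to\mathbb{R}$, regarded as a function on $\{0,1\}^n\times\{0,1\}^0\times\{0,1\}^n\times\{0,1\}^0\times\mathbb{Z}$, the function $P=S_0^*\circ S_1^*\circ\cdots\circ S_{n-1}^*(H)$ on $\{0,1\}^0\times\{0,1\}^n\times\{0,1\}^0\times\{0,1\}^n\times\mathbb{Z}$ satisfies, for all $\mathbf v_1,\mathbf v_2\in\{0,1\}^n$ and $e\in\mathbb{Z}$, $$P(\emptyset\mid\mathbf v_1\mid\emptyset\mid\mathbf v_2\mid e)=\sum_{\mathbf s_1\in\{0,1\}^n}\sum_{\mathbf s_2\in\{0,1\}^n}H\big(\mathbf s_1\mid\mathbf s_2\mid e-l^n_{\lambda(\mathbf s_1)}(\mathbf v_1)-l^n_{\lambda(\mathbf s_2)}(\mathbf v_2)\big).$$ Equivalently, $(x,y,z)\mapsto P(\emptyset\mid\lambda^{-1}(x)\mid\emptyset\mid\lambda^{-1}(y)\mid z)$ is the adjoint of the linear map $f\mapsto\tilde f$, $\tilde f(\mathbf s_1\mid\mathbf s_2\mid d)=\sum_{\mathbf u_1,\mathbf u_2\in\{0,1\}^n}f\big(\lambda(\mathbf u_1),\lambda(\mathbf u_2),l^n_{\lambda(\mathbf s_1)}(\mathbf u_1)+l^n_{\lambda(\mathbf s_2)}(\mathbf u_2)+d\big)$ (the 3D discrete Radon transform of planes), acting on finitely supported $f: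\{0,\dots,N-1\}^2\times\mathbb{Z}\to\mathbb{R}$.
   Context: Bit vectors: for $\mathbf u=(u_0,\dots,u_{k-1})\in\{0,1\}^k$, $\lambda(\mathbf u)=\sum_{i=0}^{k-1}u_i2^i$ (first entry least significant), $\lambda(\emptyset)=0$; $(a,\boldsymbol\sigma)$ denotes the vector with first entry $a$ followed by the entries of $\boldsymbol\sigma$. Discrete lines: $l^0_s(\emptyset)=0$ and $l^k_s(u_0,\dots,u_{k-1})=l^{k-1}_{\lfloor s/2\rfloor}(u_0,\dots,u_{k-2})+u_{k-1}\lfloor(s+1)/2\rfloor$ for $k\ge1$, $s\ge0$. For $0\le m\le n-1$ and finitely supported $H$ on $\{0,1\}^{m+1}\times\{0,1\}^{n-m-1}\times\{0,1\}^{m+1}\times\{0,1\}^{n-m-1}\times\mathbb{Z}$, $S_m^*H$ is the function on $\{0,1\}^{m}\times\{0,1\}^{n-m}\times\{0,1\}^{m}\times\{0,1\}^{n-m}\times\mathbb{Z}$ given by $(S_m^*H)(\boldsymbol\sigma_1\mid(w_1,\mathbf v_1)\mid\boldsymbol\sigma_2\mid(w_2,\mathbf v_2)\mid d)=\sum_{a,b\in\{0,1\}}H((a,\boldsymbol\sigma_1)\mid\mathbf v_1\mid(b,\boldsymbol\sigma_2)\mid\mathbf v_2\mid d-w_1(a+\lambda(\boldsymbol\sigma_1))-w_2(b+\lambda(\boldsymbol\sigma_2)))$. *)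

(* Defs.v *)
From mathcomp Require Import all_boot all_order all_algebra.
From mathcomp Require Import reals.
Set Implicit Arguments. Unset Strict Implicit. Unset Printing Implicit Defensive.
Import Order.TTheory GRing.Theory Num.Theory.
Local Open Scope ring_scope.

(* Bit vectors are sequences of booleans; first entry least significant. *)
Fixpoint lam (u : seq bool) : nat :=
  match u with [::] => 0%N | b :: r => (b + 2 * lam r)%N end.

(* Auxiliary: discrete line evaluated on the reversed vector
   (last entry of the original vector first). *)
Fixpoint lineRev (s : nat) (ur : seq bool) : nat :=
  match ur with
  | [::] => 0%N
  | x :: r => (lineRev (s %/ 2) r + x * ((s + 1) %/ 2))%N
  end.

(* l^k_s(u_0,...,u_{k-1}) with k = size u:
   l^0_s() = 0, l^k_s(u) = l^{k-1}_{floor(s/2)}(u_0..u_{k-2}) + u_{k-1} floor((s+1)/2). *)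
Definition line (s : nat) (u : seq bool) : nat := lineRev s (rev u).

(* Functions on {0,1}^p x {0,1}^q x {0,1}^p x {0,1}^q x Z, encoded with
   sequence arguments (values outside the intended lengths are irrelevant). *)
Definition fn5 (R : Type) := seq bool -> seq bool -> seq bool -> seq bool -> int -> R.

(* S_m^* (for ambient n): maps functions on the (m+1, n-m-1) domain to
   functions on the (m, n-m) domain; set to 0 outside the (m, n-m) domain. *)
Definition Sstar (R : nmodType) (n m : nat) (H : fn5 R) : fn5 R :=
  fun s1 x1 s2 x2 d =>
    match x1, x2 with
    | w1 :: v1, w2 :: v2 =>
      if [&& size s1 == m, size s2 == m, size x1 == (n - m)%N
           & size x2 == (n - m)%N] then
        \sum_(a : bool) \sum_(b : bool)
          H (a :: s1) v1 (b :: s2) v2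
            (d - (w1 * (a + lam s1))%N%:Z - (w2 * (b + lam s2))%N%:Z)
      else 0
    | _, _ => 0
    end.

Definition Scomp (R : nmodType) (n : nat) (H : fn5 R) : fn5 R :=
  foldr (fun m G => Sstar n m G) H (iota 0 n).

Definition liftH (R : nmodType) (n : nat)
    (H : n.-tuple bool -> n.-tuple bool -> int -> R) : fn5 R :=
  fun s1 x1 s2 x2 d =>
    match insub s1 : option (n.-tuple bool), insub s2 : option (n.-tuple bool),
          x1, x2 with
    | Some t1, Some t2, [::], [::] => H t1 t2 d
    | _, _, _, _ => 0
    end.

(* Finite support in Z (the bit-vector coordinates range over finite sets). *)
Definition fin_supp (R : nmodType) (n : nat)
    (H : n.-tuple bool -> n.-tuple bool -> int -> R) : Prop :=
  exists M : nat, forall s1 s2 d, (M < `|d|)%N -> H s1 s2 d = 0.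

(* Main.v *)
Require Import Defs.
From mathcomp Require Import all_boot all_order all_algebra.
From mathcomp Require Import reals.
From mathcomp Require Import zify.
Import Order.TTheory GRing.Theory Num.Theory.
Local Open Scope ring_scope.

Section Aux.
Variable R : nmodType.

Fixpoint sumr (k : nat) (F : seq bool -> R) : R :=
  match k with
  | 0 => F [::]
  | k'.+1 => \sum_(a : bool) sumr k' (fun r => F (a :: r))
  end.

Lemma sumr_ext k F G : (forall r, F r = G r) -> sumr k F = sumr k G.
Proof.
elim: k F G => [|k IH] F G FG //=; apply: eq_bigr => a _; exact: IH.
Qed.

Lemma sumr_sum k (F : bool -> seq bool -> R) :
  sumr k (fun r => \sum_(b : bool) F b r) = \sum_(b : bool) sumr k (F b).
Proof.
elim: k F => [|k IH] F //=.
rewrite (eq_bigr (fun a => \sum_(b : bool) sumr k (fun r => F b (a :: r)))).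
  by rewrite exchange_big.
by move=> a _; rewrite IH.
Qed.

Lemma sumr_tuple k F : sumr k F = \sum_(t : k.-tuple bool) F t.
Proof.
elim: k F => [|k IH] F /=.
  rewrite (big_pred1 [tuple]) // => t /=; apply/esym/eqP/val_inj; by case: t => [[]].
rewrite (eq_bigr (fun a => \sum_(t : k.-tuple bool) F (a :: t))); last by move=> a _; rewrite IH.
rewrite pair_big /=.
rewrite (reindex (fun p : bool * k.-tuple bool => [tuple of p.1 :: p.2])) /=; first by [].
exists (fun t : k.+1.-tuple bool => (thead t, [tuple of behead t])).
  by move=> [a t] _ /=; rewrite theadE; congr pair; apply: val_inj.
by move=> t _ /=; rewrite [RHS]tuple_eta.
Qed.
End Aux.
Arguments sumr {R}.

Fixpoint Cr (r s : seq bool) (x : seq bool) : nat :=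
  match x, r with
  | w :: v, a :: r' => (w * (a + lam s) + Cr r' (a :: s) v)%N
  | _, _ => 0%N
  end.

Lemma Cr_rcons r s0 x a w : size r = size x ->
  Cr (rcons r a) s0 (rcons x w) = (Cr r s0 x + w * (a + lam (catrev r s0)))%N.
Proof.
elim: r s0 x => [|b r IH] s0 x; case: x => [|y x] //= Hs.
  by rewrite addn0.
by rewrite IH ?addnA //; case: Hs.
Qed.

Lemma line_cons a s v w :
  line (lam (a :: s)) (rcons v w) = (line (lam s) v + w * (a + lam s))%N.
Proof.
rewrite /line rev_rcons /=.
have -> : ((a + 2 * lam s) %/ 2 = lam s)%N by case: a; lia.
have -> : ((a + 2 * lam s + 1) %/ 2 = a + lam s)%N by case: a; lia.
by [].
Qed.

Lemma Cr_line r x : size r = size x -> Cr r [::] x = line (lam (rev r)) x.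
Proof.
elim/last_ind: r x => [|r a IH] x.
  by case: x.
case/lastP: x => [|x w]; rewrite ?size_rcons //= => [[Hs]].
by rewrite Cr_rcons // rev_rcons line_cons IH.
Qed.

Theorem mainTheorem5 (R : realType) (n : nat) (hn : (1 <= n)%N)
    (H : n.-tuple bool -> n.-tuple bool -> int -> R) :
  fin_supp H ->
  forall (v1 v2 : n.-tuple bool) (e : int),
    Scomp n (liftH H) [::] v1 [::] v2 e =
    \sum_(s1 : n.-tuple bool) \sum_(s2 : n.-tuple bool)
       H s1 s2 (e - (line (lam s1) v1)%:Z - (line (lam s2) v2)%:Z).
Proof.
move=> _ v1 v2 e.
pose T k := foldr (fun m G => Sstar n m G) (liftH H) (iota (n - k) k).
have Tstep k : (k < n)%N -> T k.+1 = Sstar n (n - k.+1) (T k).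
  by move=> lt; rewrite /T /= subnSK.
have claim : forall k, (k <= n)%N -> forall s1 s2 x1 x2 d,
    size s1 = (n - k)%N -> size s2 = (n - k)%N -> size x1 = k -> size x2 = k ->
    T k s1 x1 s2 x2 d = sumr k (fun r1 => sumr k (fun r2 =>
      liftH H (catrev r1 s1) [::] (catrev r2 s2) [::]
        (d - (Cr r1 s1 x1)%:Z - (Cr r2 s2 x2)%:Z))).
  elim=> [|k IH] lek s1 s2 x1 x2 d H1 H2 Hx1 Hx2.
    by case: x1 Hx1 => //; case: x2 Hx2 => // _ _ /=; rewrite !subr0.
  rewrite Tstep //.
  case: x1 Hx1 => [|w1 x1] //= [Hx1]; case: x2 Hx2 => [|w2 x2] //= [Hx2].
  rewrite H1 H2 Hx1 Hx2 subKn // !eqxx /=.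
  have sz1 : forall a : bool, size (a :: s1) = (n - k)%N by move=> a; rewrite /= H1 subnSK.
  have sz2 : forall b : bool, size (b :: s2) = (n - k)%N by move=> b; rewrite /= H2 subnSK.
  apply: eq_bigr => a _.
  rewrite (eq_bigr _ (fun b _ => IH (ltnW lek) (a :: s1) (b :: s2) x1 x2 _ (sz1 a) (sz2 b) Hx1 Hx2)).
  symmetry; apply: etrans; first exact: sumr_sum.
  apply: eq_bigr => b _; apply: sumr_ext => r1; apply: sumr_ext => r2 /=; congr (liftH _ _ _ _ _ _).
  by rewrite !PoszD !opprD !addrA; congr (_ - _); rewrite addrAC.
have -> : Scomp n (liftH H) = T n by rewrite /T subnn.
rewrite claim ?subnn ?size_tuple // sumr_tuple.
rewrite (reindex_inj (h := fun t : n.-tuple bool => [tuple of rev t])); last first.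
  by move=> t u /(congr1 val) /= /(congr1 rev); rewrite !revK => /val_inj.
apply: eq_bigr => t1 _; rewrite sumr_tuple.
rewrite (reindex_inj (h := fun t : n.-tuple bool => [tuple of rev t])); last first.
  by move=> t u /(congr1 val) /= /(congr1 rev); rewrite !revK => /val_inj.
apply: eq_bigr => t2 _ /=.
rewrite /liftH -!/(rev _) !revK !valK.
by rewrite !Cr_line ?size_rev ?size_tuple // !revK.
Qed.
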